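(* If $Q$ is a Jordan loop, $x\in Q$ and $n\ge 0$ is an integer with binary expansion $n=\sum_{i=0}^k a_i2^i$ ($a_i\in\{0,1\}$), then $x^{n}=x^{1\cdot a_0}\bigl(x^{2\cdot a_1}\bigl(\cdots\bigl(x^{2^{k-1}\cdot a_{k-1}}\, x^{2^k\cdot a_k}\bigr)\cdots\bigr)\bigr).$
   Context: A loop is a set $Q$ with a binary operation (juxtaposition) and neutral element $e$ such that for all $a,b$ the equations $ax=b$, $ya=b$ have unique solutions. A Jordan loop is a commutative loop satisfying $x^2(yx)=(x^2y)x$. For $k\ge 0$, $x^k$ denotes the right-associated product $x(x(\cdots(xe)\cdots))$ with $k$ factors $x$; in particular $x^0=e$. *)

(* Defs.v *)
From mathcomp Require Import all_boot.
Set Implicit Arguments. Unset Strict Implicit. Unset Printing Implicit Defensive.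

Definition is_loop (T : Type) (mul : T -> T -> T) (e : T) : Prop :=
  (forall a, mul e a = a /\ mul a e = a) /\
  (forall a b, exists! x, mul a x = b) /\
  (forall a b, exists! y, mul y a = b).

Definition is_jordan_loop (T : Type) (mul : T -> T -> T) (e : T) : Prop :=
  is_loop mul e /\
  (forall a b, mul a b = mul b a) /\
  (forall x y, mul (mul x x) (mul y x) = mul (mul (mul x x) y) x).

Fixpoint rpow (T : Type) (mul : T -> T -> T) (e : T) (x : T) (k : nat) : T :=
  match k with
  | 0 => e
  | k'.+1 => mul x (rpow mul e x k')
  end.

Fixpoint binprod (T : Type) (mul : T -> T -> T) (e : T) (x : T)
    (a : nat -> nat) (i m : nat) : T :=
  match m with
  | 0 => rpow mul e x (2 ^ i * a i)
  | m'.+1 => mul (rpow mul e x (2 ^ i * a i)) (binprod mul e x a i.+1 m')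
  end.

(* Main.v *)
Require Import Defs.
From mathcomp Require Import all_boot.

Section S.
Variables (T : Type) (mul : T -> T -> T) (e : T).
Hypothesis HQ : is_jordan_loop mul e.

Lemma jl_e y : mul e y = y /\ mul y e = y.
Proof. by case: HQ => [[H _] _]; apply: H. Qed.

Lemma jl_comm a b : mul a b = mul b a.
Proof. by case: HQ => _ [H _]; apply: H. Qed.

Lemma jl_jor y z : mul (mul y y) (mul y z) = mul y (mul (mul y y) z).
Proof.
case: HQ => _ [C J].
by rewrite [mul y z]C J [mul _ y]C.
Qed.

Lemma pow2 y n : mul (mul y y) (rpow mul e y n) = rpow mul e y n.+2.
Proof.
elim: n => [|n IH] /=; first by rewrite !(jl_e _).2.
by rewrite jl_jor IH.
Qed.

Lemma powdouble y j : rpow mul e (mul y y) j = rpow mul e y (2 * j).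
Proof.
elim: j => [|j IH]; first by rewrite muln0.
by rewrite [LHS]/= IH pow2 mulnS add2n.
Qed.

Lemma powexp x i j : rpow mul e (rpow mul e x (2 ^ i)) j = rpow mul e x (2 ^ i * j).
Proof.
elim: i j => [|i IH] j /=.
  rewrite expn0 mul1n /= (jl_e x).2.
  by elim: j => //= j ->.
have -> : rpow mul e x (2 ^ i.+1) = mul (rpow mul e x (2 ^ i)) (rpow mul e x (2 ^ i)).
  by rewrite expnS mulnC -IH /= (jl_e _).2.
by rewrite powdouble IH expnS mulnA [2 * 2 ^ i]mulnC.
Qed.

Lemma binprod_eq x a m : forall i, (forall j, i <= j -> a j <= 1) ->
  binprod mul e x a i m = rpow mul e x (2 ^ i * \sum_(j < m.+1) a (i + j) * 2 ^ j).
Proof.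
elim: m => [|m IH] i Ha.
  by rewrite big_ord_recl big_ord0 addn0 expn0 muln1 addn0.
rewrite /= IH; last by move=> j Hj; apply: Ha; apply: ltnW.
rewrite [in RHS]big_ord_recl addn0 expn0 muln1.
have -> : \sum_(j < m.+1) a (i + lift ord0 j) * 2 ^ lift ord0 j
        = 2 * \sum_(j < m.+1) a (i.+1 + j) * 2 ^ j.
  rewrite big_distrr /=; apply: eq_bigr => j _.
  by rewrite /bump /= add1n addnS addSn expnS mulnCA.
rewrite -!powexp (powexp x i.+1).
set z := rpow mul e x (2 ^ i).
have -> : rpow mul e x (2 ^ i.+1 * \sum_(j < m.+1) a (i.+1 + j) * 2 ^ j)
   = rpow mul e z (2 * \sum_(j < m.+1) a (i.+1 + j) * 2 ^ j).
  by rewrite /z powexp expnS mulnA [2 ^ i * 2]mulnC.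
have := Ha i (leqnn i).
case: (a i) => [|[|//]] _ /=.
  by rewrite (jl_e _).1.
by rewrite (jl_e _).2.
Qed.

End S.

Theorem corollary2p3 (T : Type) (mul : T -> T -> T) (e : T)
    (HQ : is_jordan_loop mul e) (x : T) (n k : nat) (a : nat -> nat)
    (Ha : forall i, i <= k -> a i <= 1)
    (Hn : n = \sum_(i < k.+1) a i * 2 ^ i) :
  rpow mul e x n = binprod mul e x a 0 k.
Proof.
pose b i := if i <= k then a i else 0.
have Hb : forall j, 0 <= j -> b j <= 1.
  by move=> j _; rewrite /b; case: ifP => // /Ha.
have -> : binprod mul e x a 0 k = binprod mul e x b 0 k.
  have : forall i m, i + m <= k -> binprod mul e x a i m = binprod mul e x b i m.
    move=> i m; elim: m i => [|m IH] i Hi /=.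
      by rewrite /b; rewrite addn0 in Hi; rewrite Hi.
    rewrite IH; last by rewrite addSnnS.
    by rewrite /b (leq_trans (leq_addr _ _) Hi).
  by apply; rewrite add0n.
rewrite (@binprod_eq T mul e HQ) // expn0 mul1n Hn.
congr rpow; apply: eq_bigr => i _.
by rewrite add0n /b -ltnS ltn_ord.
Qed.
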